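(* Consider Setting B and suppose the sequence of communication graphs $\{\mathcal G[k]\}_{k\ge0}$ is jointly strongly $(3f+1)$-robust w.r.t. the source set $\mathcal S$. Then for any desired rate $\rho\in(0,1)$, the regular source nodes can choose observer gains $l_i$ such that, when the regular nodes run Algorithm 2, for every $f$-total Byzantine adversarial set $\mathcal A$ and every adversarial behavior, and for every initial state and initial estimates, there exist constants $c\ge0$ and $K\in\mathbb N$ with $|\hat x_i[k]-x[k]|\le c\rho^k$ for all $k\ge K$ and all $i\in\mathcal R$.
   Context: Setting B. Scalar system $x[k+1]=ax[k]$, $a\in\mathbb R$, monitored by nodes $\mathcal V=\{1,\dots,N\}$ with measurements $y_i[k]=c_ix[k]$, $c_i\in\mathbb R$. Source set $\mathcal S=\{i\in\mathcal V:c_i\neq0\}$. Time-varying directed graphs $\mathcal G[k]=(\mathcal V,\mathcal E[k])$, $\mathcal N_i[k]=\{l\ne i:(l,i)\in\mathcal E[k]\}$; the union graph over an interval has the union of the edge sets. An unknown set $\mathcal A\subseteq\mathcal V$ of adversarial nodes with $|\mathcal A|\le f$ ($f$-total model; $\mathcal A$ may intersect $\mathcal S$); $\mathcal R=\mathcal V\setminus\mathcal A$ are regular. Adversaries are Byzantine: at each time they may send arbitrary, possibly different values (of both estimate and freshness index) to different out-neighbors, or send nothing, and may collude. At each time $k$, each node $l$ sends to its out-neighbors a pair (estimate, freshness index); regular $l$ sends its true $(\hat x_l[k],\tau_l[k])$. Algorithm 2 (executed by regular nodes). Regular source $i\in\mathcal S$: $\tau_i[k]=0$ for all $k$ and $\hat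 x_i[k+1]=a\hat x_i[k]+l_i(y_i[k]-c_i\hat x_i[k])$ with observer gain $l_i$. Regular non-source $i$: keeps $\hat x_i[k]$ (arbitrary initial), $\tau_i[k]\in\mathbb N\cup\{\omega\}$ with $\tau_i[0]=\omega$, and a list $\mathcal M_i$ of distinct node labels (initially empty, at most $2f+1$ entries, stored in $2f+1$ slots) with, for each $l\in\mathcal M_i$, a stored estimate $v_{i,l}$, stored index $d_{i,l}\in\mathbb N$ and time stamp $\phi_{i,l}$. At time $k$ let $\mathcal J_i[k]$ be the set of $l\in\mathcal N_i[k]$ whose reported index $\tau_l[k]$ lies in $\mathbb N$ and satisfies $\tau_l[k]\le k$. ''Appending $l$ at time $k$'' means: put $l$ in $\mathcal M_i$ (if absent), set $v_{i,l}=\hat x_l[k]$, $d_{i,l}=\tau_l[k]$ (reported values), $\phi_{i,l}=k$. Filtering update (F) at time $k$ (requires $|\mathcal M_i|=2f+1$): set $\tau_i[k+1]=\max_{l\in\mathcal M_i}d_{i,l}+1$; form $\bar x_{i,l}[k]=a^{k-\phi_{i,l}}v_{i,l}$ for $l\in\mathcal M_i$; discard the $f$ largest and $f$ smallest of these $2f+1$ values, call the remaining one $\bar x_i[k]$, and set $\hat x_i[k+1]=a\bar x_i[k]$. Case $\tau_i[k]=\omega$: let $\mathcal J'=\mathcal J_i[k]\setminus\mathcal M_i$. If $|\mathcal M_i|+|\mathcal J'|<2f+1$, append every $l\in\mathcal J'$, set $\tau_i[k+1]=\omega$ and $\hat x_i[k+1]=a\hat x_i[k]$. Otherwise append the $2f+1-|\mathcal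 M_i|$ nodes of $\mathcal J'$ with smallest reported indices (ties broken arbitrarily) and perform (F). Case $\tau_i[k]\ne\omega$: for each $l\in\mathcal J_i[k]\cap\mathcal M_i$ with reported $\tau_l[k]<d_{i,l}$, append $l$ (refreshing its entries); then rank the nodes of $\mathcal M_i\cup(\mathcal J_i[k]\setminus\mathcal M_i)$ by index ($d_{i,l}$ for $l\in\mathcal M_i$, reported $\tau_l[k]$ otherwise), keep the $2f+1$ with smallest index (ties arbitrary), appending newcomers and deleting dropped nodes (a retained node keeps its storage slot; a newcomer occupies the slot of a dropped node), and perform (F). In all cases, after the step every stored $d_{i,l}$ is incremented by $1$, and $\mathcal M_i$, $v$, $\phi$ carry over to time $k+1$. Definitions. For a graph $\mathcal G=(\mathcal V,\mathcal E)$ with in-neighbor sets $\mathcal N_i$ and $r\in\mathbb N_+$, a set $\mathcal C\subseteq\mathcal V$ is $r$-reachable if some $i\in\mathcal C$ has $|\mathcal N_i\setminus\mathcal C|\ge r$. $\mathcal G$ is strongly $r$-robust w.r.t. $\mathcal S\subset\mathcal V$ if every nonempty $\mathcal C\subseteq\mathcal V\setminus\mathcal S$ is $r$-reachable. A sequence $\{\mathcal G[k]\}$ is jointly strongly $r$-robust w.r.t. $\mathcal S$ if there is $T\in\mathbb N_+$ such that the union graph over $[kT,(k+1)T-1]$ is strongly $r$-robust w.r.t. $\mathcal S$ for every $k\in\mathbb N$. *)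

(* Defs.v *)
From Stdlib Require Import Reals.
From mathcomp Require Import all_boot.
Set Implicit Arguments. Unset Strict Implicit. Unset Printing Implicit Defensive.

(* A stored entry of the list M_i: (v_{i,l}, d_{i,l}, phi_{i,l}). *)
Definition entry := (R * nat * nat)%type.
(* The list M_i, indexed by node label: None = label not in M_i. *)
Definition memory (N : nat) := 'I_N -> option entry.
(* A message: None = nothing sent; Some (estimate, index), index None = omega. *)
Definition msg := option (R * option nat).

Definition dom N (m : memory N) : {set 'I_N} := [set l | isSome (m l)].
Definition dval N (m : memory N) (l : 'I_N) : nat :=
  match m l with Some (_, d, _) => d | None => 0 end.

(* In-neighbours N_i[k] = {l <> i : (l,i) in E[k]}; E k l i means edge l -> i. *)
Definition nbrs N (E : nat -> rel 'I_N) (k : nat) (i : 'I_N) : {set 'I_N} :=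
  [set l | (l != i) && E k l i].

(* Reported (estimate, index) of l, restricted to J_i[k]:
   l in N_i[k], reported index in N and <= k. *)
Definition reported N (k : nat) (Nin : {set 'I_N}) (rcv : 'I_N -> msg) (l : 'I_N)
  : option (R * nat) :=
  if l \in Nin then
    match rcv l with
    | Some (x, Some t) => if t <= k then Some (x, t) else None
    | _ => None
    end
  else None.

Definition append N (m : memory N) (P : {set 'I_N}) (rep : 'I_N -> option (R * nat))
  (k : nat) : memory N :=
  fun l => if l \in P then
             match rep l with Some (x, t) => Some (x, t, k) | None => m l end
           else m l.

Definition restrict N (m : memory N) (K : {set 'I_N}) : memory N :=
  fun l => if l \in K then m l else None.

Definition incr N (m : memory N) : memory N :=
  fun l => match m l with Some (v, d, phi) => Some (v, d.+1, phi) | None => None end.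

Definition Rleb (x y : R) : bool := if Rle_dec x y then true else false.

Definition vals N (a : R) (k : nat) (m : memory N) : seq R :=
  pmap (fun l => match m l with
                 | Some (v, _, phi) => Some (Rmult (pow a (k - phi)) v)
                 | None => None end) (enum 'I_N).

(* Discard the f largest and f smallest of the 2f+1 values: remaining one. *)
Definition trimmed (f : nat) (s : seq R) : R := nth R0 (sort Rleb s) f.

Definition maxd N (m : memory N) : nat := \max_(l in dom m) dval m l.

Definition Fupd N (f : nat) (a : R) (k : nat) (m2 : memory N)
  (xh' : R) (tau' : option nat) (m' : memory N) : Prop :=
  #|dom m2| = (2 * f).+1 /\
  tau' = Some (maxd m2).+1 /\
  xh' = Rmult a (trimmed f (vals a k m2)) /\
  m' =1 incr m2.

(* One step of Algorithm 2 at a regular non-source node at time k.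
   Nin = N_i[k], rcv l = message received from l.  Ties are arbitrary:
   any admissible choice is allowed (existentials). *)
Definition nonsource_step N (f : nat) (a : R) (k : nat) (Nin : {set 'I_N})
  (rcv : 'I_N -> msg) (xh : R) (tau : option nat) (m : memory N)
  (xh' : R) (tau' : option nat) (m' : memory N) : Prop :=
  let rep := reported k Nin rcv in
  let J := [set l | isSome (rep l)] in
  let idxr l := match rep l with Some (_, t) => t | None => 0 end in
  match tau with
  | None =>
      let J' := J :\: dom m in
      if #|dom m| + #|J'| < (2 * f).+1 then
        m' =1 incr (append m J' rep k) /\ tau' = None /\ xh' = Rmult a xh
      else
        exists P : {set 'I_N},
          [/\ P \subset J', #|dom m| + #|P| = (2 * f).+1,
              (forall l l', l \in P -> l' \in J' :\: P -> idxr l <= idxr l') &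
              Fupd f a k (append m P rep k) xh' tau' m']
  | Some _ =>
      let Rf := [set l in J :&: dom m | idxr l < dval m l] in
      let m1 := append m Rf rep k in
      let C := dom m1 :|: J in
      let idx l := if l \in dom m1 then dval m1 l else idxr l in
      exists K : {set 'I_N},
        [/\ K \subset C, #|K| = (2 * f).+1,
            (forall l l', l \in K -> l' \in C :\: K -> idx l <= idx l') &
            Fupd f a k (restrict (append m1 (K :\: dom m1) rep k) K) xh' tau' m']
  end.

Definition source_set N (c : 'I_N -> R) : {set 'I_N} :=
  [set i | if Req_EM_T (c i) R0 then false else true].

Definition union_nbrs N (E : nat -> rel 'I_N) (t0 T : nat) (i : 'I_N) : {set 'I_N} :=
  [set l | (l != i) && [exists t : 'I_T, E (t0 + t) l i]].

Definition r_reachable N (Nb : 'I_N -> {set 'I_N}) (C : {set 'I_N}) (r : nat) : Prop :=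
  exists2 i, i \in C & r <= #|Nb i :\: C|.

Definition strongly_robust N (Nb : 'I_N -> {set 'I_N}) (S : {set 'I_N}) (r : nat) : Prop :=
  forall C : {set 'I_N}, C != set0 -> C \subset ~: S -> r_reachable Nb C r.

Definition jointly_strongly_robust N (E : nat -> rel 'I_N) (S : {set 'I_N}) (r : nat)
  : Prop :=
  exists2 T, 0 < T & forall k, strongly_robust (union_nbrs E (k * T) T) S r.

(* An execution of Setting B with Algorithm 2 run by the regular nodes
   (adversarial set A, adversarial messages adv k l i sent by l to i at time k). *)
Definition run N (f : nat) (a : R) (c gain : 'I_N -> R) (E : nat -> rel 'I_N)
  (A : {set 'I_N}) (adv : nat -> 'I_N -> 'I_N -> msg) (x : nat -> R)
  (xh : nat -> 'I_N -> R) (tau : nat -> 'I_N -> option nat)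
  (mem : nat -> 'I_N -> memory N) : Prop :=
  let sent k l i : msg := if l \in A then adv k l i else Some (xh k l, tau k l) in
  (forall k, x k.+1 = Rmult a (x k)) /\
  (forall i, i \notin A -> i \in source_set c -> forall k,
      tau k i = Some 0 /\
      xh k.+1 i = Rplus (Rmult a (xh k i))
                        (Rmult (gain i) (Rminus (Rmult (c i) (x k)) (Rmult (c i) (xh k i))))) /\
  (forall i, i \notin A -> i \notin source_set c ->
      tau 0 i = None /\ (forall l, mem 0 i l = None) /\
      forall k, nonsource_step f a k (nbrs E k i) (fun l => sent k l i)
                  (xh k i) (tau k i) (mem k i) (xh k.+1 i) (tau k.+1 i) (mem k.+1 i)).

(* Main.v *)
Require Import Defs.
From Stdlib Require Import Reals Lra Lia ClassicalEpsilon.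
From mathcomp Require Import all_boot zify.
Set Implicit Arguments. Unset Strict Implicit. Unset Printing Implicit Defensive.
Lemma ar2 k0 t T r b : t < T -> r + k0 <= b + (k0 + t) ->
  (k0 + t + (k0 + T - (k0 + t).+1)).+1 = k0 + T /\ r + (k0 + T - (k0 + t).+1).+1 <= b + T.
Proof. move=> H1 H2; split; lia. Qed.
Lemma ar3 k1 k Y m t : k1 <= k -> m <= Y -> t <= m + (k - k1) -> t + k1 <= Y + k.
Proof. lia. Qed.
Lemma ar4 N T k : 0 < T -> (2 * N + 3) * T <= k ->
  N <= k %/ T - N - 1 /\ (k %/ T - N - 1 + N) * T <= k /\
  forall t, t + (k %/ T - N - 1 + N) * T <= N * T + k -> t < k.
Proof.
move=> HT Hk.
have Hq : 2 * N + 3 <= k %/ T by rewrite leq_divRL.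
have Hd := divn_eq k T. have Hm := ltn_pmod k HT.
set q := k %/ T in Hq Hd *; set rr := k %% T in Hd Hm.
have -> : q - N - 1 + N = q.-1 by lia.
split; first lia.
have HqT : q.-1 * T + T = q * T by rewrite addnC -mulSn prednK //; lia.
split; first nia.
move=> t Ht. nia.
Qed.
Lemma ar5 t k0 b k T : t + k0 <= b + k -> t + (k0 + T) <= b + T + k.
Proof. lia. Qed.

Lemma in_dom N (m : memory N) l : (l \in dom m) = isSome (m l).
Proof. by rewrite inE. Qed.
Lemma dom_incr N (m : memory N) : dom (incr m) = dom m.
Proof. apply/setP => l; rewrite !in_dom /incr; by case: (m l) => [[[v d] p]|]. Qed.
Lemma dval_incr N (m : memory N) l : l \in dom m -> dval (incr m) l = (dval m l).+1.
Proof. rewrite in_dom /dval /incr; by case: (m l) => [[[v d] p]|]. Qed.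
Lemma dom_eq N (m m' : memory N) : m =1 m' -> dom m = dom m'.
Proof. move=> H; apply/setP => l; by rewrite !in_dom H. Qed.
Lemma maxd_eq N (m m' : memory N) : m =1 m' -> maxd m = maxd m'.
Proof. move=> H; rewrite /maxd (dom_eq H); apply: eq_bigr => l _; by rewrite /dval H. Qed.
Lemma maxd_le N (m : memory N) X : (maxd m <= X) = [forall l in dom m, dval m l <= X].
Proof. apply/bigmax_leqP/forall_inP => H l Hl; exact: H. Qed.
Lemma le_maxd N (m : memory N) l : l \in dom m -> dval m l <= maxd m.
Proof. move=> Hl; rewrite /maxd; by apply: leq_bigmax_cond. Qed.
Lemma maxd_incr N (m : memory N) : 0 < #|dom m| -> maxd (incr m) = (maxd m).+1.
Proof.
move=> Hd; apply/eqP; rewrite eqn_leq; apply/andP; split.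
  rewrite maxd_le; apply/forall_inP => l; rewrite dom_incr => Hl.
  by rewrite dval_incr // ltnS le_maxd.
case: (eq_bigmax_cond (dval m) Hd) => l0 Hl0 Heq.
rewrite /maxd in Heq; rewrite {1}/maxd Heq -dval_incr //.
by apply: le_maxd; rewrite dom_incr.
Qed.

Definition derived N (rep : 'I_N -> option (R * nat)) k (m m2 : memory N) :=
  forall l e, m2 l = Some e -> m l = Some e \/ exists v t, rep l = Some (v, t) /\ e = (v, t, k).

Lemma append_derived N (m : memory N) P rep k : derived rep k m (append m P rep k).
Proof.
move=> l e; rewrite /append; case: (l \in P); last by left.
case: (rep l) => [[v t]|]; last by left.
move=> [<-]; right; by exists v, t.
Qed.
Lemma restrict_derived N rep k (m m2 : memory N) K :
  derived rep k m m2 -> derived rep k m (restrict m2 K).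
Proof. move=> H l e; rewrite /restrict; case: (l \in K) => //; exact: H. Qed.
Lemma derived_trans N rep k (m m1 m2 : memory N) :
  derived rep k m m1 -> derived rep k m1 m2 -> derived rep k m m2.
Proof.
move=> H1 H2 l e /H2 [/H1 //|H]; by right.
Qed.

Lemma Fupd_facts N f a k (m2 : memory N) xh' tau' m' :
  Fupd f a k m2 xh' tau' m' -> tau' = Some (maxd m') /\ #|dom m'| = (2 * f).+1.
Proof.
case=> Hd [-> [_ Hm]]; rewrite (maxd_eq Hm) (dom_eq Hm) dom_incr maxd_incr ?Hd //.
Qed.

Lemma step_derived N f a k Nin rcv xh tau (m : memory N) xh' tau' m' :
  nonsource_step f a k Nin rcv xh tau m xh' tau' m' ->
  exists m2, derived (reported k Nin rcv) k m m2 /\ m' =1 incr m2 /\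
    ((tau' = None /\ tau = None) \/ Fupd f a k m2 xh' tau' m').
Proof.
rewrite /nonsource_step; case: tau => [t0|].
  case=> K [_ _ _ HF]; eexists; split; last split; last (right; exact HF).
    apply: restrict_derived; apply: derived_trans; apply: append_derived.
  by case: HF => [_ [_ [_ H]]].
case: ifP => _.
  case=> Hm [-> _]; eexists; split; last split; [| exact Hm| by left]; exact: append_derived.
case=> P [_ _ _ HF]; eexists; split; last split; last (right; exact HF).
  exact: append_derived.
by case: HF => [_ [_ [_ H]]].
Qed.

Lemma step_None N f a k Nin rcv xh tau (m : memory N) xh' m' :
  nonsource_step f a k Nin rcv xh tau m xh' None m' ->
  [/\ tau = None, dom m \subset dom m',
      [set l | isSome (reported k Nin rcv l)] \subset dom m' & #|dom m'| <= 2 * f].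
Proof.
rewrite /nonsource_step; case: tau => [t0|].
  by case=> K [_ _ _ [_ []]].
set rep := reported k Nin rcv.
set J := [set l | isSome (rep l)].
case: ifP => Hlt; last by case=> P [_ _ _ [_ []]].
case=> Hm _.
have Hdom : dom m' = dom m :|: (J :\: dom m).
  rewrite (dom_eq Hm) dom_incr; apply/setP => l.
  rewrite in_setU !in_dom /append.
  case: ifP => HJ; last by rewrite orbF.
  move: HJ; rewrite in_setD !inE => /andP [_]; rewrite orbT /rep; case: (reported k Nin rcv l) => [[v t]|] //=.
split => //.
- by rewrite Hdom subsetUl.
- rewrite Hdom; apply/subsetP => l Hl; rewrite in_setU in_setD Hl andbT.
  by case: (l \in dom m).
- rewrite Hdom; apply: leq_trans (leq_card_setU _ _) _; by rewrite -ltnS.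
Qed.

Lemma step_None' N f a k Nin rcv xh tau (m : memory N) xh' tau' m' :
  nonsource_step f a k Nin rcv xh tau m xh' tau' m' -> tau' = None ->
  [/\ tau = None, dom m \subset dom m',
      [set l | isSome (reported k Nin rcv l)] \subset dom m' & #|dom m'| <= 2 * f].
Proof. move=> H Hn; subst tau'; exact: step_None H. Qed.
Lemma dval_eq N (m m' : memory N) l : m =1 m' -> dval m l = dval m' l.
Proof. by move=> H; rewrite /dval H. Qed.

Lemma step_Some N f a k Nin rcv xh t0 (m : memory N) xh' tau' m' :
  nonsource_step f a k Nin rcv xh (Some t0) m xh' tau' m' ->
  #|dom m| = (2 * f).+1 ->
  [/\ tau' = Some (maxd m'), #|dom m'| = (2 * f).+1, maxd m' <= (maxd m).+1 &
     forall l X, (l \in dom m /\ dval m l <= X) \/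
                 (exists v r, reported k Nin rcv l = Some (v, r) /\ r <= X) ->
        (l \in dom m' /\ dval m' l <= X.+1) \/ maxd m' <= X.+1].
Proof.
move=> Hstep Hdm; have Hstep0 := Hstep; move: Hstep; rewrite /nonsource_step.
set rep := reported k Nin rcv.
set J := [set l | isSome (rep l)].
set idxr := fun l => match rep l with Some (_, t) => t | None => 0 end.
set Rf := [set l in J :&: dom m | idxr l < dval m l].
set m1 := append m Rf rep k.
set C := dom m1 :|: J.
set idx := fun l => if l \in dom m1 then dval m1 l else idxr l.
case=> K [HKC HK Hord HF].
have [Htau' Hdm'] := Fupd_facts HF.
set m2 := restrict (append m1 (K :\: dom m1) rep k) K in HF.
case: HF => Hd2 [_ [_ Hm']].
have Hmx : maxd m' = (maxd m2).+1 by rewrite (maxd_eq Hm') maxd_incr ?Hd2.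
have HRf : forall l, l \in Rf -> exists v r, [/\ rep l = Some (v, r), r < dval m l & m1 l = Some (v, r, k)].
  move=> l HR; have HR' := HR; move: HR'; rewrite !inE => /andP [/andP [HJ _] Hlt].
  rewrite /m1 /append HR; move: HJ Hlt; rewrite /idxr.
  case: (rep l) => [[v t]|] //= _ Hlt; by exists v, t.
have HnRf : forall l, l \notin Rf -> m1 l = m l.
  by move=> l HR; rewrite /m1 /append (negbTE HR).
have Hdom1 : dom m1 = dom m.
  apply/setP => l; rewrite !in_dom; case: (boolP (l \in Rf)) => HR; last by rewrite HnRf.
  have [v [r [_ _ ->]]] := HRf l HR.
  by move: HR; rewrite !inE => /andP [/andP [_ ->] _].
have Hdv1 : forall l, dval m1 l <= dval m l.
  move=> l; case: (boolP (l \in Rf)) => HR; last by rewrite /dval HnRf.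
  have [v [r [_ Hlt Hm1]]] := HRf l HR; rewrite {1}/dval Hm1; exact: ltnW.
have Hdv1J : forall l v r, l \in dom m -> rep l = Some (v, r) -> dval m1 l <= r.
  move=> l v r Hl Hrep; case: (boolP (l \in Rf)) => HR.
    have [v' [r' [Hrep' _ Hm1]]] := HRf l HR; rewrite /dval Hm1.
    by move: Hrep'; rewrite Hrep => [[_ ->]].
  rewrite /dval HnRf //; move: Hl; rewrite in_dom => Hl; move: HR; rewrite !inE Hl andbT /idxr Hrep /= -leqNgt.
  by rewrite /dval.
have H2in : forall l, l \in K -> l \in dom m2 /\ dval m2 l = idx l.
  move=> l HlK; rewrite /m2 in_dom /dval /restrict HlK /append in_setD HlK andbT.
  rewrite /idx; case: (boolP (l \in dom m1)) => Hl1 /=.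
    by move: Hl1; rewrite in_dom /dval; case: (m1 l) => [[[v d] p]|].
  have : l \in C by apply: (subsetP HKC).
  rewrite in_setU (negbTE Hl1) /= inE /idxr; by case: (rep l) => [[v t]|].
have H2dom : dom m2 = K.
  apply/setP => l; case: (boolP (l \in K)) => HlK; first by have [-> _] := H2in l HlK.
  by rewrite in_dom /m2 /restrict (negbTE HlK).
have Hmax2 : forall l, l \in C :\: K -> maxd m2 <= idx l.
  move=> l Hl; rewrite maxd_le; apply/forall_inP => l'; rewrite H2dom => Hl'.
  have [_ ->] := H2in l' Hl'; exact: Hord.
split => //.
- rewrite Hmx ltnS maxd_le; apply/forall_inP => l0; rewrite H2dom => Hl0.
  have [_ ->] := H2in l0 Hl0; rewrite /idx.
  case: (boolP (l0 \in dom m1)) => Hl01.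
    apply: leq_trans (Hdv1 l0) _; apply: le_maxd; by rewrite -Hdom1.
  have : ~~ (dom m1 \subset K).
    apply/negP => Hsub.
    have : l0 |: dom m1 \subset K by rewrite subUset sub1set Hl0 Hsub.
    move/subset_leq_card; rewrite cardsU1 Hl01 Hdom1 Hdm HK; lia.
  case/subsetPn => l Hl1 HlK.
  have Hc : l \in C :\: K by rewrite in_setD HlK in_setU Hl1.
  have := Hord l0 l Hl0 Hc; rewrite (negbTE Hl01) Hl1 => H.
  apply: leq_trans H _; apply: leq_trans (Hdv1 l) _; apply: le_maxd; by rewrite -Hdom1.
- move=> l X Hhyp.
  have [HlC HiX] : l \in C /\ idx l <= X.
    case: Hhyp => [[Hl HX]|[v [r [Hrep Hr]]]].
      split; first by rewrite in_setU Hdom1 Hl.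
      rewrite /idx Hdom1 Hl; exact: leq_trans (Hdv1 l) HX.
    split; first by rewrite in_setU !inE Hrep orbT.
    rewrite /idx; case: ifP => Hl1.
      apply: leq_trans Hr; apply: (Hdv1J l v r) => //; by rewrite -Hdom1.
    by rewrite /idxr Hrep.
  case: (boolP (l \in K)) => HlK.
    left; have [Hl2 Hd] := H2in l HlK; split.
      by rewrite (dom_eq Hm') dom_incr.
    by rewrite (dval_eq l Hm') dval_incr // Hd ltnS.
  right; rewrite Hmx ltnS; apply: leq_trans (Hmax2 l _) HiX.
  by rewrite in_setD HlK.
Qed.

Definition Reqb (x y : R) : bool := if Req_EM_T x y then true else false.

Lemma RlebP x y : reflect (Rle x y) (Rleb x y).
Proof. rewrite /Rleb; case: Rle_dec => H; by constructor. Qed.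

Lemma Rleb_total : total Rleb.
Proof. move=> x y; rewrite /Rleb; case: (Rle_dec x y) => //= H; case: (Rle_dec y x) => //= H1; lra. Qed.
Lemma Rleb_trans : transitive Rleb.
Proof. move=> y x z /RlebP H1 /RlebP H2; apply/RlebP; lra. Qed.
Lemma Rleb_refl : reflexive Rleb.
Proof. move=> x; apply/RlebP; lra. Qed.


Lemma trimmed_eq f (s : seq R) v : size s = (2 * f).+1 ->
  count (fun y => ~~ Reqb y v) s <= f -> trimmed f s = v.
Proof.
move=> Hs Hc; rewrite /trimmed.
set s' := sort Rleb s.
have Hss : sorted Rleb s' by apply: sort_sorted; exact: Rleb_total.
have Hsz : size s' = (2 * f).+1 by rewrite size_sort.
have Hc' : count (fun y => ~~ Reqb y v) s' <= f by rewrite count_sort.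
have Hf : f < size s' by rewrite Hsz; lia.
have Hle : forall i j, i <= j -> j < size s' -> Rle (nth R0 s' i) (nth R0 s' j).
  move=> i j Hij Hj; apply/RlebP; apply: (sorted_leq_nth Rleb_trans Rleb_refl) => //;
  rewrite inE; lia.
have Hne : forall y, y <> v -> ~~ Reqb y v.
  by move=> y Hy; rewrite /Reqb; case: Req_EM_T.
destruct (Rtotal_order (nth R0 s' f) v) as [Hlt|[Heq|Hgt]]; [| by [] |].
2: {
  have Hall : all (fun y => ~~ Reqb y v) (drop f s').
    apply/(all_nthP R0) => j; rewrite size_drop => Hj; rewrite nth_drop.
    apply: Hne; have := Hle f (f + j) (leq_addr _ _) ltac:(lia); lra.
  move: Hc'; rewrite -(cat_take_drop f s') count_cat.
  rewrite all_count in Hall; rewrite (eqP Hall); rewrite size_drop Hsz; lia. }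
have Hall : all (fun y => ~~ Reqb y v) (take f.+1 s').
    apply/(all_nthP R0) => j; rewrite size_take_min => Hj; rewrite nth_take; last lia.
    apply: Hne; have := Hle j f ltac:(lia) Hf; lra.
  move: Hc'; rewrite -(cat_take_drop f.+1 s') count_cat.
  rewrite all_count in Hall; rewrite (eqP Hall); rewrite size_take_min Hsz; lia.
Qed.

Lemma count_enum_card N (P : pred 'I_N) : count P (enum 'I_N) = #|[set l | P l]|.
Proof.
rewrite cardE size_filter /enum_mem -!enumT count_filter; apply: eq_count => l.
by rewrite !inE andbT.
Qed.

Lemma count_pmap (aT rT : Type) (F : aT -> option rT) (p : pred rT) s :
  count p (pmap F s) = count (fun l => oapp p false (F l)) s.
Proof. elim: s => //= y s IH; case: (F y) => //= v; by rewrite IH. Qed.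

Lemma x_shift (a : R) (x : nat -> R) : (forall k, x k.+1 = Rmult a (x k)) ->
  forall p n, x (n + p) = Rmult (pow a n) (x p).
Proof. move=> Hx p; elim=> [|n IH] /=; first by rewrite Rmult_1_l. by rewrite Hx IH Rmult_assoc. Qed.

Lemma reported_some N k Nin (rcv : 'I_N -> msg) l v t :
  reported k Nin rcv l = Some (v, t) -> t <= k /\ l \in Nin /\ rcv l = Some (v, Some t).
Proof.
rewrite /reported; case: ifP => // Hl; case: (rcv l) => // [[w [s|]]] //.
case: ifP => // Hs [<- <-]; by [].
Qed.

Section Main.
Variables (N f : nat) (a : R) (c : 'I_N -> R) (E : nat -> rel 'I_N) (A : {set 'I_N})
  (adv : nat -> 'I_N -> 'I_N -> msg) (x : nat -> R) (xh : nat -> 'I_N -> R)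
  (tau : nat -> 'I_N -> option nat) (mem : nat -> 'I_N -> memory N).
Hypothesis HA : #|A| <= f.
Hypothesis Hx : forall k, x k.+1 = Rmult a (x k).
Hypothesis Hsrc : forall i, i \notin A -> i \in source_set c -> forall k,
  tau k i = Some 0 /\ xh k.+1 i = x k.+1.
Hypothesis Hns : forall i, i \notin A -> i \notin source_set c ->
  tau 0 i = None /\ (forall l, mem 0 i l = None) /\
  forall k, nonsource_step f a k (nbrs E k i)
     (fun l => if l \in A then adv k l i else Some (xh k l, tau k l))
     (xh k i) (tau k i) (mem k i) (xh k.+1 i) (tau k.+1 i) (mem k.+1 i).

Definition rep k i := reported k (nbrs E k i)
     (fun l => if l \in A then adv k l i else Some (xh k l, tau k l)).

Lemma rep_some k i l v t : rep k i l = Some (v, t) ->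
  t <= k /\ (l \notin A -> xh k l = v /\ tau k l = Some t).
Proof.
case/reported_some => Ht [_ Hr]; split => // HlA; move: Hr; rewrite (negbTE HlA).
by case=> -> ->.
Qed.

Definition INVm k (m : memory N) :=
  (forall l, dval m l <= k) /\
  (forall l v d phi, m l = Some (v, d, phi) -> l \notin A ->
     [/\ phi <= k, v = xh phi l, tau phi l = Some (d + phi - k) & k <= d + phi]).

Lemma INV_derived k i (m m2 : memory N) : INVm k m -> derived (rep k i) k m m2 -> INVm k m2.
Proof.
move=> [H1 H2] Hd; split.
  move=> l; rewrite /dval; case Hm: (m2 l) => [[[v d] p]|] //.
  case: (Hd l _ Hm) => [Hm0|[v' [t [Hr [_ -> _]]]]].
    by have := H1 l; rewrite /dval Hm0.
  by case: (rep_some Hr).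
move=> l v d phi Hm HlA; case: (Hd l _ Hm) => [Hm0|[v' [t [Hr [-> -> ->]]]]].
  exact: H2 Hm0 HlA.
have [Ht Hreg] := rep_some Hr; have [-> ->] := Hreg HlA; split => //.
  by rewrite addnK.
by rewrite leq_addl.
Qed.

Lemma INV_incr k (m m' : memory N) : INVm k m -> m' =1 incr m -> INVm k.+1 m'.
Proof.
move=> [H1 H2] Hm; split.
  move=> l; rewrite (dval_eq l Hm) /dval /incr; have := H1 l; rewrite /dval.
  case: (m l) => [[[v d] p]|] //= H; lia.
move=> l v d phi; rewrite Hm /incr; case Hml: (m l) => [[[v0 d0] p0]|] //= [<- <- <-] HlA.
have [Hp -> Ht Hk] := H2 _ _ _ _ Hml HlA; split => //; try lia; rewrite Ht; congr Some; lia.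

Qed.

Lemma INV_all i : i \notin A -> i \notin source_set c -> forall k,
  INVm k (mem k i) /\ (forall t, tau k i = Some t -> t <= k).
Proof.
move=> HiA HiS; have [H0 [Hm0 Hst]] := Hns HiA HiS.
elim=> [|k [IH1 IH2]].
  split; last by rewrite H0.
  split; first by move=> l; rewrite /dval Hm0.
  by move=> l v d phi; rewrite Hm0.
have [m2 [Hder [Hm' Hc]]] := step_derived (Hst k).
have HI2 : INVm k m2 by apply: (INV_derived (i := i) IH1).
split; first exact: INV_incr HI2 Hm'.
move=> t; case: Hc => [[-> _] //|HF].
have [_ [-> _]] := HF; case=> <-; rewrite ltnS maxd_le; apply/forall_inP => l _.
by case: HI2 => HH _; apply: HH.
Qed.

Lemma tau_le i k t : i \notin A -> tau k i = Some t -> t <= k.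
Proof.
move=> HiA Ht; case: (boolP (i \in source_set c)) => HiS.
  by move: Ht; have [-> _] := Hsrc HiA HiS k; case=> <-.
have [_ H] := INV_all HiA HiS k; exact: H Ht.
Qed.


Lemma exact_all k : forall i t, i \notin A -> tau k i = Some t -> t < k -> xh k i = x k.
Proof.
elim/ltn_ind: k => k IH i t HiA Ht Htk.
case: k IH Ht Htk => [|k0] IH Ht Htk; first by [].
case: (boolP (i \in source_set c)) => HiS; first by have [_ ->] := Hsrc HiA HiS k0.
have [_ [_ Hst]] := Hns HiA HiS.
have [m2 [Hder [Hm' Hc]]] := step_derived (Hst k0).
case: Hc => [[Hn _]|HF]; first by rewrite Hn in Ht.
have HI2 : INVm k0 m2 := INV_derived (i:=i) (INV_all HiA HiS k0).1 Hder.
case: HF => Hd2 [Htau [Hxh _]].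
rewrite Ht in Htau; case: Htau => Htm.
rewrite Hxh Hx; congr Rmult.
apply: trimmed_eq.
- rewrite size_pmap count_enum_card -Hd2; apply: eq_card => l.
  rewrite !inE; by case: (m2 l) => [[[v d] p]|].
- rewrite count_pmap count_enum_card; apply: leq_trans HA; apply: subset_leq_card.
  apply/subsetP => l; rewrite inE.
  case Hml: (m2 l) => [[[v d] p]|] //=.
  case: (boolP (l \in A)) => // HlA.
  have [Hp Hv Htl Hk] := HI2.2 _ _ _ _ Hml HlA.
  have Hd : d <= maxd m2 by have := @le_maxd _ m2 l; rewrite in_dom /dval Hml; apply.
  have Hxp : xh p l = x p by apply: (IH p _ l (d + p - k0)) => //; lia.
  have Heq : Rmult (pow a (k0 - p)) v = x k0 by rewrite Hv Hxp -(x_shift Hx) subnK.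
  rewrite /Reqb; case: Req_EM_T => // Hne _; exfalso; exact: Hne Heq.
Qed.


Definition pb (P : Prop) : bool := if excluded_middle_informative P then true else false.
Lemma pbP (P : Prop) : reflect P (pb P).
Proof. rewrite /pb; case: excluded_middle_informative => H; by constructor. Qed.

Lemma some_next i k : i \notin A -> isSome (tau k i) -> isSome (tau k.+1 i).
Proof.
move=> HiA Hs; case: (boolP (i \in source_set c)) => HiS.
  by have [-> _] := Hsrc HiA HiS k.+1.
have [_ [_ Hst]] := Hns HiA HiS.
have [m2 [_ [_ Hc]]] := step_derived (Hst k).
case: Hc => [[_ Hn]|HF]; first by rewrite Hn in Hs.
by have [-> _] := Fupd_facts HF.
Qed.

Lemma some_persist i k j : i \notin A -> isSome (tau k i) -> isSome (tau (k + j) i).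
Proof. move=> HiA Hs; elim: j => [|j IH]; first by rewrite addn0. rewrite addnS; exact: some_next. Qed.

Lemma some_persist' i k k' : i \notin A -> k <= k' -> isSome (tau k i) -> isSome (tau k' i).
Proof. move=> HiA Hk Hs; rewrite -(subnKC Hk); exact: some_persist. Qed.

Lemma some_state i k t : i \notin A -> i \notin source_set c -> tau k i = Some t ->
  t = maxd (mem k i) /\ #|dom (mem k i)| = (2 * f).+1.
Proof.
move=> HiA HiS Ht; have [H0 [_ Hst]] := Hns HiA HiS.
case: k Ht => [|k0] Ht; first by rewrite H0 in Ht.
have [m2 [_ [_ Hc]]] := step_derived (Hst k0).
case: Hc => [[Hn _]|HF]; first by rewrite Hn in Ht.
have [Ht' Hd] := Fupd_facts HF; split => //; by move: Ht'; rewrite Ht => [[]].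
Qed.

Lemma none_dom i k j : i \notin A -> i \notin source_set c -> tau (k + j) i = None ->
  dom (mem k i) \subset dom (mem (k + j) i).
Proof.
move=> HiA HiS; have [_ [_ Hst]] := Hns HiA HiS.
elim: j => [|j IH]; first by rewrite addn0.
rewrite addnS => Hn; have [Hn' Hsub _ _] := step_None' (Hst (k + j)) Hn.
exact: subset_trans (IH Hn') Hsub.
Qed.

Lemma maxd_grow i k j : i \notin A -> i \notin source_set c -> isSome (tau k i) ->
  maxd (mem (k + j) i) <= maxd (mem k i) + j.
Proof.
move=> HiA HiS Hs; have [_ [_ Hst]] := Hns HiA HiS.
elim: j => [|j IH]; first by rewrite !addn0.
have Hs' := some_persist j HiA Hs.
case Htk: (tau (k + j) i) Hs' => [t|] // _.
have [_ Hd] := some_state HiA HiS Htk.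
move: (Hst (k + j)); rewrite Htk => Hstep.
have [_ _ Hb _] := step_Some Hstep Hd.
rewrite addnS; apply: leq_trans Hb _; by rewrite addnS ltnS.
Qed.

Lemma propag i s l X : i \notin A -> i \notin source_set c -> isSome (tau s i) ->
  ((l \in dom (mem s i) /\ dval (mem s i) l <= X) \/
   (exists v r, rep s i l = Some (v, r) /\ r <= X)) ->
  forall j, (l \in dom (mem (s + j).+1 i) /\ dval (mem (s + j).+1 i) l <= X + j.+1) \/
            maxd (mem (s + j).+1 i) <= X + j.+1.
Proof.
move=> HiA HiS Hs Hhyp; have [_ [_ Hst]] := Hns HiA HiS.
elim=> [|j IH].
  case Hts: (tau s i) Hs => [t|] // _.
  have [_ Hd] := some_state HiA HiS Hts.
  move: (Hst s); rewrite Hts addn0 addn1 => Hstep.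
  have [_ _ _ Hc] := step_Some Hstep Hd; exact: Hc.
have Hs' := some_persist j.+1 HiA Hs.
rewrite addnS in Hs'.
case Htk: (tau (s + j).+1 i) Hs' => [t|] // _.
have [_ Hd] := some_state HiA HiS Htk.
move: (Hst (s + j).+1); rewrite Htk => Hstep.
have [_ _ Hb Hc] := step_Some Hstep Hd.
rewrite addnS; case: IH => [H|H].
  have := Hc l (X + j.+1) (or_introl H); by rewrite !addnS.
right; apply: leq_trans Hb _; move: H; rewrite !addnS; lia.
Qed.

Variable T : nat.
Hypothesis HT : 0 < T.
Hypothesis Hrob : forall w, strongly_robust (union_nbrs E (w * T) T) (source_set c) (3 * f).+1.

Lemma extract w (C : {set 'I_N}) : C != set0 -> C \subset ~: source_set c ->
  exists i, i \in C /\ exists G : {set 'I_N}, (2 * f).+1 <= #|G| /\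
    forall l, l \in G -> [/\ l \notin A, l \notin C, l != i &
                          exists t, t < T /\ E (w * T + t) l i].
Proof.
move=> HC HCS; have [i Hi Hr] := Hrob w HC HCS.
exists i; split => //.
set U := union_nbrs E (w * T) T i :\: C.
exists (U :\: A); split.
  have := cardsID A U; have : #|U :&: A| <= #|A| by apply: subset_leq_card; apply: subsetIr.
  move=> H1 H2; move: Hr; rewrite -/U -H2 => Hr; have := leq_trans H1 HA; move: Hr; set p := #|U :&: A|; set q := #|U :\: A|; lia.
move=> l; rewrite !in_setD /union_nbrs inE => /andP [HlA /andP [HlC /andP [Hli /existsP [t Ht]]]].
split => //; exists t; split => //; exact: ltn_ord.
Qed.

Definition Hset n := [set i | (i \notin A) && isSome (tau (n * T) i)].

Lemma src_some i k : i \notin A -> i \in source_set c -> tau k i = Some 0.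
Proof. by move=> HiA HiS; have [-> _] := Hsrc HiA HiS k. Qed.

Lemma phase n : n <= #|Hset n| \/ ~: A \subset Hset n.
Proof.
elim: n => [|n IH]; first by left.
have Hmono : Hset n \subset Hset n.+1.
  apply/subsetP => i; rewrite !inE => /andP [HiA Hs]; rewrite HiA /=.
  apply: some_persist' Hs => //; by rewrite leq_mul2r leqnSn orbT.
case: (boolP (~: A \subset Hset n)) => Hall.
  right; exact: subset_trans Hall Hmono.
have {}IH : n <= #|Hset n| by case: IH => // H; rewrite H in Hall.
set C := ~: A :\: Hset n.
have HC0 : C != set0.
  case/subsetPn: Hall => l Hl1 Hl2; apply/set0Pn; exists l; by rewrite in_setD Hl1 Hl2.
have HCS : C \subset ~: source_set c.
  apply/subsetP => l; rewrite in_setD in_setC => /andP [Hl HlA]; rewrite in_setC.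
  apply/negP => HlS; move: Hl; by rewrite inE HlA (src_some _ HlA HlS).
have [i [HiC [G [HG HGp]]]] := extract n HC0 HCS.
have HiA : i \notin A by move: HiC; rewrite in_setD in_setC => /andP [_ ->].
have HiH : i \notin Hset n by move: HiC; rewrite in_setD => /andP [->].
have HiS : i \notin source_set c by move: (subsetP HCS i HiC); rewrite in_setC.
have [_ [_ Hst]] := Hns HiA HiS.
have HiH1 : i \in Hset n.+1.
  rewrite inE HiA /=; case Hti: (tau (n.+1 * T) i) => [t|] //; exfalso.
  have Hsub : G \subset dom (mem (n.+1 * T) i).
    apply/subsetP => l Hl; have [HlA HlC Hli [t [Ht HE]]] := HGp l Hl.
    have HlH : l \in Hset n by move: HlC; rewrite in_setD in_setC HlA andbT negbK.
    have Hsl : isSome (tau (n * T + t) l).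
      apply: some_persist' HlA (leq_addr _ _) _; by move: HlH; rewrite inE => /andP [_].
    case Htl : (tau (n * T + t) l) Hsl => [r|] // _.
    have Hrs := tau_le HlA Htl.
    have Hrep : rep (n * T + t) i l = Some (xh (n * T + t) l, r).
      have Hnb : l \in nbrs E (n * T + t) i by rewrite inE Hli HE.
      by rewrite /rep /reported Hnb (negbTE HlA) Htl Hrs.
    have Hle1 : (n * T + t).+1 <= n.+1 * T by rewrite mulSn [T + _]addnC -addnS leq_add2l.
    have Hn1 : tau (n * T + t).+1 i = None.
      case Hx1 : (tau (n * T + t).+1 i) => [t1|] //.
      have Hs1 : isSome (tau (n * T + t).+1 i) by rewrite Hx1.
      have := some_persist' HiA Hle1 Hs1; by rewrite Hti.
    have [_ _ HJ _] := step_None' (Hst (n * T + t)) Hn1.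
    have Hl1 : l \in dom (mem (n * T + t).+1 i) by apply: (subsetP HJ); rewrite inE; move: Hrep; rewrite /rep => ->.
    have := @none_dom i (n * T + t).+1 (n.+1 * T - (n * T + t).+1) HiA HiS.
    rewrite subnKC // => H; exact: (subsetP (H Hti)).
  have Hcard : #|dom (mem (n.+1 * T) i)| <= 2 * f.
    have HT1 : n.+1 * T = (n.+1 * T).-1.+1 by rewrite prednK // muln_gt0.
    move: Hti Hsub; rewrite HT1 => Hti Hsub.
    by have [_ _ _ ->] := step_None' (Hst _) Hti.
  have := leq_trans HG (leq_trans (subset_leq_card Hsub) Hcard); by rewrite ltnn.
left; have : i |: Hset n \subset Hset n.+1 by rewrite subUset sub1set HiH1 Hmono.
move/subset_leq_card; rewrite cardsU1 HiH add1n; exact: leq_trans.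
Qed.

Lemma all_some i : i \notin A -> isSome (tau (N * T) i).
Proof.
move=> HiA; suff : i \in Hset N by rewrite inE => /andP [_].
case: (phase N) => [H|H]; last by apply: (subsetP H); rewrite in_setC.
apply/negPn/negP => Hi.
have : Hset N \subset [set~ i] by apply/subsetP => l Hl; rewrite !inE; apply/negP => /eqP Hli; subst l; rewrite Hl in Hi.
move/subset_leq_card; rewrite cardsC1 card_ord => H2.
move: (leq_trans H H2); by rewrite leqNgt ltn_predL (leq_ltn_trans (leq0n _) (ltn_ord i)).
Qed.

Definition good k0 b q := forall k, k0 <= k -> exists t, tau k q = Some t /\ t + k0 <= b + k.
Definition Gset w0 n := [set q | (q \notin A) && pb (good ((w0 + n) * T) (n * T) q)].

Lemma good_mono k0 b q : good k0 b q -> good (k0 + T) (b + T) q.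
Proof.
move=> H k Hk; have [t [Ht Hb]] := H k (leq_trans (leq_addr _ _) Hk).
exists t; split => //; exact: ar5.
Qed.

Lemma src_good k0 b q : q \notin A -> q \in source_set c -> good k0 b q.
Proof.
move=> HqA HqS k Hk; exists 0; split; first exact: src_some.
by rewrite add0n (leq_trans Hk) // leq_addl.
Qed.

Lemma mulS_T m : m.+1 * T = m * T + T.
Proof. by rewrite mulSn addnC. Qed.

Lemma goodness w0 : N <= w0 -> forall n, n <= #|Gset w0 n| \/ ~: A \subset Gset w0 n.
Proof.
move=> Hw0; elim=> [|n IH]; first by left.
have Hk1 : (w0 + n.+1) * T = (w0 + n) * T + T by rewrite addnS mulS_T.
have Hmono : Gset w0 n \subset Gset w0 n.+1.
  apply/subsetP => i; rewrite !inE => /andP [HiA /pbP Hg]; rewrite HiA /=.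
  apply/pbP; rewrite Hk1 mulS_T; exact: good_mono.
case: (boolP (~: A \subset Gset w0 n)) => Hall.
  right; exact: subset_trans Hall Hmono.
have {}IH : n <= #|Gset w0 n| by case: IH => // H; rewrite H in Hall.
set C := ~: A :\: Gset w0 n.
have HC0 : C != set0.
  case/subsetPn: Hall => l Hl1 Hl2; apply/set0Pn; exists l; by rewrite in_setD Hl1 Hl2.
have HCS : C \subset ~: source_set c.
  apply/subsetP => l; rewrite in_setD in_setC => /andP [Hl HlA]; rewrite in_setC.
  apply/negP => HlS; move: Hl; rewrite inE HlA /=; apply/negP; rewrite negbK.
  apply/pbP; exact: src_good.
have [i [HiC [G [HG HGp]]]] := extract (w0 + n) HC0 HCS.
have HiA : i \notin A by move: HiC; rewrite in_setD in_setC => /andP [_ ->].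
have HiH : i \notin Gset w0 n by move: HiC; rewrite in_setD => /andP [->].
have HiS : i \notin source_set c by move: (subsetP HCS i HiC); rewrite in_setC.
have HiH1 : i \in Gset w0 n.+1.
  rewrite inE HiA /=; apply/pbP; rewrite Hk1 mulS_T.
  set k0 := (w0 + n) * T.
  have Hs0 : isSome (tau k0 i).
    apply: some_persist' HiA _ (all_some HiA); rewrite leq_mul2r.
    by rewrite (leq_trans Hw0) ?orbT // leq_addr.
  set Y := n * T + T.
  have Hsk1 : isSome (tau (k0 + T) i) by apply: some_persist.
  have Hgl : forall l, l \in G ->
      (l \in dom (mem (k0 + T) i) /\ dval (mem (k0 + T) i) l <= Y) \/ maxd (mem (k0 + T) i) <= Y.
    move=> l Hl; have [HlA HlC Hli [t [Ht HE]]] := HGp l Hl.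
    have HlG : good k0 (n * T) l.
      move: HlC; rewrite in_setD in_setC HlA andbT negbK inE HlA /=; by move/pbP.
    have [r [Htl Hr]] := HlG (k0 + t) (leq_addr _ _).
    have Hrs := tau_le HlA Htl.
    have Hrep : rep (k0 + t) i l = Some (xh (k0 + t) l, r).
      have Hnb : l \in nbrs E (k0 + t) i by rewrite inE Hli HE.
      by rewrite /rep /reported Hnb (negbTE HlA) Htl Hrs.
    have Hsi : isSome (tau (k0 + t) i) by apply: some_persist.
    have [E1 E2] := ar2 Ht Hr.
    have := propag HiA HiS Hsi (or_intror (ex_intro _ _ (ex_intro _ _ (conj Hrep (leqnn r)))))
                   (k0 + T - (k0 + t).+1).
    rewrite E1; case=> [[H1 H2]|H]; [left; split => //| right]; exact: leq_trans E2.
  have Hmax : maxd (mem (k0 + T) i) <= Y.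
    set m := mem (k0 + T) i.
    case: (boolP [forall l in G, (l \in dom m) && (dval m l <= Y)]) => Hf.
      have Hsub : G \subset dom m.
        apply/subsetP => l Hl; by move/forall_inP/(_ l Hl)/andP: Hf => [].
      case Htk: (tau (k0 + T) i) Hsk1 => [t|] // _.
      have [_ Hd] := some_state HiA HiS Htk.
      have : G == dom m by rewrite eqEcard Hsub -/m Hd.
      move/eqP => HGd; rewrite maxd_le; apply/forall_inP => l; rewrite -HGd => Hl.
      by move/forall_inP/(_ l Hl)/andP: Hf => [].
    move/forall_inPn: Hf => [l Hl Hn].
    case: (Hgl l Hl) => // [[H1 H2]]; by rewrite H1 H2 in Hn.
  move=> k Hk.
  have := some_persist' HiA Hk Hsk1; case Htk: (tau k i) => [t|] // _.
  exists t; split => //.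
  have [-> _] := some_state HiA HiS Htk.
  have := maxd_grow (k - (k0 + T)) HiA HiS Hsk1; rewrite subnKC // => Hg.
  exact: ar3 Hk Hmax Hg.
left; have : i |: Gset w0 n \subset Gset w0 n.+1 by rewrite subUset sub1set HiH1 Hmono.
move/subset_leq_card; rewrite cardsU1 HiH add1n; exact: leq_trans.
Qed.

Lemma all_good w0 i : N <= w0 -> i \notin A -> good ((w0 + N) * T) (N * T) i.
Proof.
move=> Hw0 HiA; suff : i \in Gset w0 N by rewrite inE => /andP [_ /pbP].
case: (goodness Hw0 N) => [H|H]; last by apply: (subsetP H); rewrite in_setC.
apply/negPn/negP => Hi.
have : Gset w0 N \subset [set~ i] by apply/subsetP => l Hl; rewrite !inE; apply/negP => /eqP Hli; subst l; rewrite Hl in Hi.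
move/subset_leq_card; rewrite cardsC1 card_ord => H2.
move: (leq_trans H H2); by rewrite leqNgt ltn_predL (leq_ltn_trans (leq0n _) (ltn_ord i)).
Qed.

Lemma eventually_exact : exists K, forall k, K <= k -> forall i, i \notin A -> xh k i = x k.
Proof.
exists ((2 * N + 3) * T) => k Hk i HiA.
have [H1 [H2 H3]] := ar4 HT Hk.
have [t [Ht Hb]] := all_good H1 HiA H2.
exact: exact_all HiA Ht (H3 t Hb).
Qed.

End Main.

Theorem theorem2 (N f : nat) (a : R) (c : 'I_N -> R) (E : nat -> rel 'I_N) :
  jointly_strongly_robust E (source_set c) (3 * f).+1 ->
  forall rho : R, Rlt R0 rho /\ Rlt rho R1 ->
  exists gain : 'I_N -> R,
    forall (A : {set 'I_N}), #|A| <= f ->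
    forall (adv : nat -> 'I_N -> 'I_N -> msg) (x : nat -> R)
           (xh : nat -> 'I_N -> R) (tau : nat -> 'I_N -> option nat)
           (mem : nat -> 'I_N -> memory N),
      run f a c gain E A adv x xh tau mem ->
      exists (cst : R) (K : nat),
        Rle R0 cst /\
        forall k, K <= k -> forall i, i \notin A ->
          Rle (Rabs (Rminus (xh k i) (x k))) (Rmult cst (pow rho k)).
Proof.
move=> [T HT Hrob] rho Hrho.
exists (fun i => if Req_EM_T (c i) R0 then R0 else Rdiv a (c i)).
move=> A HA adv x xh tau mem [Hx [Hs Hn]].
have Hsrc : forall i, i \notin A -> i \in source_set c -> forall k,
    tau k i = Some 0 /\ xh k.+1 i = x k.+1.
  move=> i HiA HiS k; have [Ht Hxh] := Hs i HiA HiS k; split => //.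
  rewrite Hxh Hx; move: HiS; rewrite inE /=; case: Req_EM_T => // Hc _ /=.
  field; exact Hc.
have [K HK] := eventually_exact HA Hx Hsrc Hn HT Hrob.
exists R0, K; split; first lra.
move=> k Hk i HiA; rewrite (HK k Hk i HiA) Rminus_diag_eq // Rabs_R0 Rmult_0_l; lra.
Qed.
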